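(* In the setting of the context (FSR scheme with direct flux reconstruction), let $\mathcal{E}_j=(\Phi_{j+1/2}-\Phi_{j-1/2})/h$, evaluated on the exact nodal values. If $\kappa_3=0$ and $\theta_3=0$, then as $h\to0$, with all derivatives evaluated at $x_j$, $$\mathcal{E}_j=\frac{\partial f}{\partial x}+\frac{3\theta-1}{12}\frac{\partial^3 f}{\partial x^3}h^2-\frac{\kappa-1}{8}\left[\frac{\partial D}{\partial x}\frac{\partial^3 u}{\partial x^3}+D(u(x_j))\frac{\partial^4 u}{\partial x^4}\right]h^3+\frac{15\theta-13}{240}\frac{\partial^5 f}{\partial x^5}h^4+O(h^5),$$ where $f$ denotes $f(u(x))$ and $\partial D/\partial x=\frac{d}{dx}D(u(x))$. In particular, with $\theta=1/3$ the scheme is third-order accurate.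
   Context: Let $h>0$, uniform grid $x_i=ih$, $i\in\mathbb{Z}$. Let $u$ be a smooth real function of $x$, $u_i=u(x_i)$; let $f$ (flux) and $D$ (dissipation coefficient) be smooth real functions of one variable; $f_i=f(u_i)$. For nodal values $g_i$ define successive central differences $(g_x)_i=(g_{i+1}-g_{i-1})/(2h)$, $(g_{xx})_i=((g_x)_{i+1}-(g_x)_{i-1})/(2h)$, and for the face $i+1/2$ with $j=i$, $k=i+1$, define $T_j[g]=\frac h4((g_x)_k-(g_x)_j)-\frac{h^2}{4}(g_{xx})_j$, $T_k[g]=\frac h4((g_x)_k-(g_x)_j)-\frac{h^2}{4}(g_{xx})_k$. Reconstructed solution states (parameters $\kappa,\kappa_3$): $u_L=\kappa\frac{u_j+u_k}{2}+(1-\kappa)[u_j+\frac h2(u_x)_j]+\kappa_3T_j[u]$, $u_R=\kappa\frac{u_j+u_k}{2}+(1-\kappa)[u_k-\frac h2(u_x)_k]+\kappa_3T_k[u]$. Reconstructed fluxes (parameters $\theta,\theta_3$): $f_L=\theta\frac{f_j+f_k}{2}+(1-\theta)[f_j+\frac h2(f_x)_j]+\theta_3T_j[f]$, $f_R=\theta\frac{f_j+f_k}{2}+(1-\theta)[f_k-\frac h2(f_x)_k]+\theta_3T_k[f]$. Numerical flux: $\Phi_{i+1/2}=\frac12(f_L+f_R)-\frac12D_{i+1/2}(u_R-u_L)$, with $D_{i+1/2}=\bar D(u_i,u_{i+1})$ for a smooth symmetric $\bar D$ with $\bar D(v,v)=D(v)$. *)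

(* Defs.v *)
From Stdlib Require Import Reals ZArith List.
From Coquelicot Require Import Coquelicot.
Open Scope R_scope.

Definition smooth (g : R -> R) : Prop :=
  forall (n : nat) (x : R), ex_derive_n g n x.

Fixpoint pd (ds : list bool) (g : R -> R -> R) : R -> R -> R :=
  match ds with
  | nil => g
  | b :: ds' =>
      let g' := pd ds' g in
      if b then (fun x y => Derive (fun t => g' t y) x)
      else (fun x y => Derive (fun t => g' x t) y)
  end.

Definition smooth2 (g : R -> R -> R) : Prop :=
  forall ds : list bool,
    (forall x y, ex_derive (fun t => pd ds g t y) x /\
                 ex_derive (fun t => pd ds g x t) y) /\
    (forall x y, continuous (fun p : R * R => pd ds g (fst p) (snd p)) (x, y)).

(** Nodal data are functions [Z -> R] (index i <-> node x_i). *)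

Definition dx (h : R) (g : Z -> R) (i : Z) : R :=
  (g (i + 1)%Z - g (i - 1)%Z) / (2 * h).

Definition dxx (h : R) (g : Z -> R) (i : Z) : R :=
  (dx h g (i + 1)%Z - dx h g (i - 1)%Z) / (2 * h).

(* Face i+1/2, j = i, k = i+1 *)
Definition Tj (h : R) (g : Z -> R) (i : Z) : R :=
  h / 4 * (dx h g (i + 1)%Z - dx h g i) - h ^ 2 / 4 * dxx h g i.
Definition Tk (h : R) (g : Z -> R) (i : Z) : R :=
  h / 4 * (dx h g (i + 1)%Z - dx h g i) - h ^ 2 / 4 * dxx h g (i + 1)%Z.

(* Left / right reconstructed states at face i+1/2 with parameters (k, k3) *)
Definition recL (k k3 h : R) (g : Z -> R) (i : Z) : R :=
  k * (g i + g (i + 1)%Z) / 2 + (1 - k) * (g i + h / 2 * dx h g i)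
  + k3 * Tj h g i.
Definition recR (k k3 h : R) (g : Z -> R) (i : Z) : R :=
  k * (g i + g (i + 1)%Z) / 2
  + (1 - k) * (g (i + 1)%Z - h / 2 * dx h g (i + 1)%Z)
  + k3 * Tk h g i.

Definition numflux (f : R -> R) (Dbar : R -> R -> R)
  (kap kap3 th th3 h : R) (uu : Z -> R) (i : Z) : R :=
  let fu := fun m => f (uu m) in
  (recL th th3 h fu i + recR th th3 h fu i) / 2
  - Dbar (uu i) (uu (i + 1)%Z) * (recR kap kap3 h uu i - recL kap kap3 h uu i) / 2.

(** Truncation error E_j at the node x_j = X of the uniform grid of spacing h
    through X (nodes X + (i-j) h; we index so that j = 0). *)
Definition fsr_error (u f : R -> R) (Dbar : R -> R -> R)
  (kap kap3 th th3 h X : R) : R :=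
  let uu := fun i : Z => u (X + IZR i * h) in
  (numflux f Dbar kap kap3 th th3 h uu 0%Z
   - numflux f Dbar kap kap3 th th3 h uu (-1)%Z) / h.

(* Main.v *)
Require Import Defs.
From Stdlib Require Import Reals ZArith List Lra Lia.
From Coquelicot Require Import Coquelicot.
Open Scope R_scope.

Definition sm (n : nat) (g : R -> R) := forall k x, (k <= n)%nat -> ex_derive_n g k x.

Lemma sm_ext n g h : (forall t, g t = h t) -> sm n g -> sm n h.
Proof. intros E H k x Hk. apply (ex_derive_n_ext g h); auto. Qed.

Lemma sm_le m n g : (m <= n)%nat -> sm n g -> sm m g.
Proof. intros Hmn H k x Hk. apply H. lia. Qed.

Lemma sm_0 g : sm 0 g.
Proof. intros k x Hk. assert (k = 0%nat) by lia. subst. exact I. Qed.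

Lemma sm_S n g : (forall x, ex_derive g x) -> sm n (Derive g) -> sm (S n) g.
Proof.
  intros H1 H2 k x Hk. destruct k as [|k]. exact I.
  destruct k as [|k]. simpl. apply H1.
  simpl. apply (ex_derive_ext (Derive_n (Derive g) k)).
  intro t. rewrite (Derive_n_comp g k 1). now rewrite Nat.add_comm.
  apply (H2 (S k) x). lia.
Qed.

Lemma sm_Sinv n g : sm (S n) g -> (forall x, ex_derive g x) /\ sm n (Derive g).
Proof.
  intros H. split. intro x. apply (H 1%nat x). lia.
  intros k x Hk. destruct k as [|k]. exact I.
  simpl. apply (ex_derive_ext (Derive_n g (S k))).
  intro t. rewrite (Derive_n_comp g k 1). now rewrite Nat.add_comm.
  apply (H (S (S k)) x). lia.
Qed.

Lemma sm_plus n : forall g h, sm n g -> sm n h -> sm n (fun x => g x + h x).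
Proof.
  induction n; intros g h Hg Hh. apply sm_0.
  destruct (sm_Sinv _ _ Hg) as [Hg1 Hg2]. destruct (sm_Sinv _ _ Hh) as [Hh1 Hh2].
  apply sm_S. intro x. exact (ex_derive_plus g h x (Hg1 x) (Hh1 x)).
  apply sm_ext with (fun x => Derive g x + Derive h x).
  intro t. rewrite Derive_plus; auto.
  apply IHn; auto.
Qed.

Lemma sm_mult n : forall g h, sm n g -> sm n h -> sm n (fun x => g x * h x).
Proof.
  induction n; intros g h Hg Hh. apply sm_0.
  destruct (sm_Sinv _ _ Hg) as [Hg1 Hg2]. destruct (sm_Sinv _ _ Hh) as [Hh1 Hh2].
  apply sm_S. intro x. apply ex_derive_mult; auto.
  apply sm_ext with (fun x => Derive g x * h x + g x * Derive h x).
  intro t. rewrite Derive_mult; auto.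
  apply sm_plus; apply IHn; auto; eapply sm_le; try eassumption; lia.
Qed.

Lemma sm_comp n : forall g h, sm n g -> sm n h -> sm n (fun x => g (h x)).
Proof.
  induction n; intros g h Hg Hh. apply sm_0.
  destruct (sm_Sinv _ _ Hg) as [Hg1 Hg2]. destruct (sm_Sinv _ _ Hh) as [Hh1 Hh2].
  apply sm_S. intro x. apply ex_derive_comp; auto.
  apply sm_ext with (fun x => Derive h x * Derive g (h x)).
  intro t. rewrite (Derive_comp g h); auto.
  apply sm_mult; auto. apply IHn; auto. eapply sm_le; try eassumption; lia.
Qed.

Lemma smooth_sm g : smooth g <-> forall n, sm n g.
Proof.
  split. intros H n k x _. apply H.
  intros H n x. apply (H n n x). lia.
Qed.

Lemma smooth_comp g h : smooth g -> smooth h -> smooth (fun x => g (h x)).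
Proof. rewrite !smooth_sm. intros. apply sm_comp; auto. Qed.

Lemma sum0_taylor g X n :
  sum_f_R0 (fun m => 0 ^ m / INR (fact m) * Derive_n g m X) n = g X.
Proof.
  induction n. simpl. field.
  simpl sum_f_R0. rewrite IHn. replace (0 ^ S n) with 0 by (simpl; ring). unfold Rdiv. ring.
Qed.

Lemma taylor_bound g n X : smooth g -> exists M, 0 <= M /\
  forall y, Rabs (y - X) <= 1 ->
  Rabs (g y - sum_f_R0 (fun m => (y - X)^m / INR (fact m) * Derive_n g m X) n)
    <= M * Rabs (y - X) ^ S n.
Proof.
  intros Hg.
  assert (Hc : forall t, continuity_pt (fun t => Rabs (Derive_n g (S n) t)) t).
  { intro t. apply continuity_pt_comp with (f1 := Derive_n g (S n)) (f2 := Rabs).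
    apply (proj2 (continuity_pt_filterlim _ _)). exact (ex_derive_continuous (Derive_n g (S n)) t (Hg (S (S n)) t)).
    apply Rcontinuity_abs. }
  destruct (continuity_ab_maj (fun t => Rabs (Derive_n g (S n) t)) (X - 1) (X + 1))
    as [Mx [HMx _]]. lra. intros; apply Hc.
  set (B := Rabs (Derive_n g (S n) Mx)).
  assert (Hf : 0 < INR (fact (S n))) by (apply lt_0_INR; apply lt_O_fact).
  exists (B / INR (fact (S n))). split.
  { unfold B. apply Rmult_le_pos. apply Rabs_pos. left. now apply Rinv_0_lt_compat. }
  intros y Hy.
  assert (HB : forall t, X - 1 <= t <= X + 1 -> Rabs (Derive_n g (S n) t) <= B) by (intros; apply HMx; auto).
  apply Rabs_le_between' in Hy.
  destruct (Rtotal_order X y) as [Hxy|[Hxy|Hxy]].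
  - destruct (Taylor_Lagrange g n X y Hxy) as [z [Hz Heq]].
    { intros; apply Hg. }
    rewrite Heq.
    replace (sum_f_R0 (fun m : nat => (y - X) ^ m / INR (fact m) * Derive_n g m X) n +
      (y - X) ^ S n / INR (fact (S n)) * Derive_n g (S n) z -
      sum_f_R0 (fun m : nat => (y - X) ^ m / INR (fact m) * Derive_n g m X) n)
    with ((y - X) ^ S n / INR (fact (S n)) * Derive_n g (S n) z) by ring.
    unfold Rdiv. rewrite !Rabs_mult. rewrite <- RPow_abs.
    rewrite (Rabs_pos_eq (/ INR _)) by (left; now apply Rinv_0_lt_compat).
    assert (Hz' : Rabs (Derive_n g (S n) z) <= B) by (apply HB; lra).
    assert (0 <= Rabs (y - X) ^ S n) by (apply pow_le; apply Rabs_pos).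
    assert (0 < / INR (fact (S n))) by (now apply Rinv_0_lt_compat).
    assert (0 <= Rabs (y-X)^S n * / INR (fact (S n))) by (apply Rmult_le_pos; lra). nra.
  - subst y. replace (X - X) with 0 by ring. rewrite sum0_taylor.
    replace (g X - g X) with 0 by ring. rewrite Rabs_R0.
    replace (0 ^ S n) with 0 by (simpl; ring). lra.
  - set (g' := fun t => g (- t)).
    assert (Hd : forall k t, ex_derive_n g' k t).
    { intros k t. apply ex_derive_n_comp_opp. apply filter_forall. intros; apply Hg. }
    assert (HD : forall k t, Derive_n g' k t = (-1) ^ k * Derive_n g k (- t)).
    { intros k t. apply Derive_n_comp_opp. apply filter_forall. intros; apply Hg. }
    destruct (Taylor_Lagrange g' n (- X) (- y)) as [z [Hz Heq]]. lra.
    { intros; apply Hd. }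
    unfold g' in Heq at 1. rewrite Ropp_involutive in Heq. rewrite Heq.
    rewrite (sum_eq _ (fun m => (y - X) ^ m / INR (fact m) * Derive_n g m X)).
    2:{ intros i _. rewrite HD, Ropp_involutive.
        replace (y - X) with ((- y - - X) * (-1)) by ring. rewrite Rpow_mult_distr. field.
        apply INR_fact_neq_0. }
    rewrite HD.
    replace (sum_f_R0 (fun m : nat => (y - X) ^ m / INR (fact m) * Derive_n g m X) n +
      (- y - - X) ^ S n / INR (fact (S n)) * ((-1) ^ S n * Derive_n g (S n) (- z)) -
      sum_f_R0 (fun m : nat => (y - X) ^ m / INR (fact m) * Derive_n g m X) n)
    with ((- y - - X) ^ S n / INR (fact (S n)) * ((-1) ^ S n * Derive_n g (S n) (- z))) by ring.
    unfold Rdiv. rewrite !Rabs_mult. rewrite <- !RPow_abs.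
    rewrite (Rabs_pos_eq (/ INR _)) by (left; now apply Rinv_0_lt_compat).
    replace (Rabs (-1)) with 1 by (rewrite Rabs_left; lra). rewrite pow1.
    replace (Rabs (- y - - X)) with (Rabs (y - X)) by (rewrite <- Rabs_Ropp; f_equal; ring).
    assert (Hz' : Rabs (Derive_n g (S n) (- z)) <= B) by (apply HB; lra).
    assert (0 <= Rabs (y - X) ^ S n) by (apply pow_le; apply Rabs_pos).
    assert (0 < / INR (fact (S n))) by (now apply Rinv_0_lt_compat).
    assert (0 <= Rabs (y-X)^S n * / INR (fact (S n))) by (apply Rmult_le_pos; lra). nra.
Qed.

Lemma exdiff_all Db : smooth2 Db -> forall n ds x y, ex_diff_n (pd ds Db) n x y.
Proof.
  intros H n. induction n; intros ds x y.
  - split; [|exact I]. apply (proj2 (continuity_2d_pt_filterlim _ _ _)).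
    exact (proj2 (H ds) x y).
  - split. apply (proj2 (continuity_2d_pt_filterlim _ _ _)). exact (proj2 (H ds) x y).
    split. exact (proj1 (proj1 (H ds) x y)).
    split. exact (proj2 (proj1 (H ds) x y)).
    split. exact (IHn (true :: ds) x y). exact (IHn (false :: ds) x y).
Qed.

Lemma DL1 Db c dx dy : DL_pol 1 Db c c dx dy =
  Db c c + Derive (fun t => Db t c) c * dx + Derive (fun t => Db c t) c * dy.
Proof.
  unfold DL_pol, differential, partial_derive. simpl. unfold Binomial.C. simpl. field.
Qed.

Lemma diffDb Db c : smooth2 Db ->
  differentiable_pt_lim Db c c (Derive (fun t => Db t c) c) (Derive (fun t => Db c t) c).
Proof.
  intros H.
  destruct (Taylor_Lagrange_2d Db 1 c c) as [K HK].
  { exists (mkposreal 1 Rlt_0_1). intros u v _ _. exact (exdiff_all Db H 2 nil u v). }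
  intro eps. destruct HK as [d Hd].
  assert (Hpos : 0 < Rmin d (eps / (Rabs K + 1))).
  { apply Rmin_pos. apply cond_pos. apply Rdiv_lt_0_compat. apply cond_pos.
    pose proof (Rabs_pos K); lra. }
  exists (mkposreal _ Hpos). simpl. intros u v Hu Hv.
  assert (Hd' := Hd u v (Rlt_le_trans _ _ _ Hu (Rmin_l _ _)) (Rlt_le_trans _ _ _ Hv (Rmin_l _ _))).
  rewrite DL1 in Hd'.
  set (m := Rmax (Rabs (u - c)) (Rabs (v - c))) in *.
  assert (Hm0 : 0 <= m) by (unfold m; apply Rle_trans with (Rabs (u - c)); [apply Rabs_pos|apply Rmax_l]).
  assert (Hm1 : m < eps / (Rabs K + 1)).
  { unfold m. apply Rmax_case; eapply Rlt_le_trans; try eassumption; apply Rmin_r. }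
  assert (HK1 : 0 < Rabs K + 1) by (pose proof (Rabs_pos K); lra).
  assert (Hm2 : m * (Rabs K + 1) < eps).
  { apply Rmult_lt_reg_r with (/ (Rabs K + 1)). now apply Rinv_0_lt_compat.
    rewrite Rmult_assoc, Rinv_r by lra. rewrite Rmult_1_r. exact Hm1. }
  replace (Db u v - Db c c - (Derive (fun t => Db t c) c * (u - c) + Derive (fun t => Db c t) c * (v - c)))
    with (Db u v - (Db c c + Derive (fun t => Db t c) c * (u - c) + Derive (fun t => Db c t) c * (v - c))) by ring.
  eapply Rle_trans. exact Hd'.
  assert (K <= Rabs K) by apply Rle_abs.
  simpl. nra.
Qed.

Lemma Dkey (u D : R -> R) Db X : smooth u -> smooth2 Db ->
  (forall v w, Db v w = Db w v) -> (forall v, Db v v = D v) ->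
  Derive (fun x => D (u x)) X = 2 * Derive (fun y => Db (u X) (u y)) X.
Proof.
  intros Hu H Hs Hd.
  set (c := u X).
  assert (Hux : ex_derive u X) by apply (Hu 1%nat X).
  assert (Hl : is_derive u X (Derive u X)) by (apply Derive_correct; auto).
  apply is_derive_Reals in Hl.
  pose proof (derivable_pt_lim_comp_2d Db u u X _ _ _ _ (diffDb Db c H) Hl Hl) as Hc.
  apply is_derive_Reals in Hc. apply is_derive_unique in Hc.
  rewrite (Derive_ext (fun x => D (u x)) (fun x => Db (u x) (u x))) by (intro; auto).
  rewrite Hc.
  rewrite (Derive_comp (fun t => Db c t) u X).
  2:{ exact (proj2 (proj1 (H nil) c (u X))). }
  2:{ auto. }
  rewrite (Derive_ext (fun t => Db t c) (fun t => Db c t)) by (intro; auto).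
  unfold c; ring.
Qed.

Lemma fsr_expand u f Dbar kap th h X : h <> 0 ->
  let U := fun m : Z => u (X + IZR m * h) in
  fsr_error u f Dbar kap 0 th 0 h X =
  ( /2 * ((f (U 1%Z) - f (U (-1)%Z)) + (1 - th)/4 * (2 * f (U 1%Z) - 2 * f (U (-1)%Z) - f (U 2%Z) + f (U (-2)%Z)))
   + (1 - kap)/8 * (Dbar (U 0%Z) (U 1%Z) * (U 2%Z - 3 * U 1%Z + 3 * U 0%Z - U (-1)%Z)
                  - Dbar (U (-1)%Z) (U 0%Z) * (U 1%Z - 3 * U 0%Z + 3 * U (-1)%Z - U (-2)%Z))) / h.
Proof.
  intros Hh U.
  unfold fsr_error, numflux, recL, recR, Tj, Tk, dxx, dx.
  cbn [Z.add Z.sub Z.opp Z.pos_sub Pos.add Z.succ_double Z.pred_double Z.double].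
  fold (U 0%Z) (U 1%Z) (U 2%Z) (U (-1)%Z) (U (-2)%Z).
  field. auto.
Qed.

Lemma smooth_sec2 Db c : smooth2 Db -> smooth (fun t => Db c t).
Proof.
  intros H.
  assert (E : forall n t, Derive_n (fun t => Db c t) n t = pd (repeat false n) Db c t).
  { induction n; intro t. reflexivity.
    simpl. apply Derive_ext. intro; apply IHn. }
  intros n x. destruct n. exact I. simpl.
  apply (ex_derive_ext (fun t => pd (repeat false n) Db c t)).
  intro t; symmetry; apply E.
  exact (proj2 (proj1 (H (repeat false n)) c x)).
Qed.

Definition poly5 (g : R -> R) X d :=
  Derive_n g 0 X + d * Derive_n g 1 X + d^2/2 * Derive_n g 2 X + d^3/6 * Derive_n g 3 X
  + d^4/24 * Derive_n g 4 X + d^5/120 * Derive_n g 5 X.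
Definition poly2 (g : R -> R) X d :=
  Derive_n g 0 X + d * Derive_n g 1 X + d^2/2 * Derive_n g 2 X.

Lemma taylor5 g X : smooth g -> exists M, 0 <= M /\
  forall y, Rabs (y - X) <= 1 -> Rabs (g y - poly5 g X (y - X)) <= M * Rabs (y - X) ^ 6.
Proof.
  intros H. destruct (taylor_bound g 5 X H) as [M [HM HMb]]. exists M; split; auto.
  intros y Hy. specialize (HMb y Hy).
  replace (poly5 g X (y - X)) with (sum_f_R0 (fun m => (y - X)^m / INR (fact m) * Derive_n g m X) 5); auto.
  unfold poly5. cbn [sum_f_R0 fact Nat.mul Nat.add INR]. field.
Qed.

Lemma taylor2 g X : smooth g -> exists M, 0 <= M /\
  forall y, Rabs (y - X) <= 1 -> Rabs (g y - poly2 g X (y - X)) <= M * Rabs (y - X) ^ 3.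
Proof.
  intros H. destruct (taylor_bound g 2 X H) as [M [HM HMb]]. exists M; split; auto.
  intros y Hy. specialize (HMb y Hy).
  replace (poly2 g X (y - X)) with (sum_f_R0 (fun m => (y - X)^m / INR (fact m) * Derive_n g m X) 2); auto.
  unfold poly2. cbn [sum_f_R0 fact Nat.mul Nat.add INR]. field.
Qed.

Definition bigO (n : nat) (phi : R -> R) :=
  exists C delta, 0 < delta /\ forall h, 0 < h < delta -> Rabs (phi h) <= C * h ^ n.

Lemma bigO_ext n phi psi : (forall h, 0 < h -> phi h = psi h) -> bigO n phi -> bigO n psi.
Proof.
  intros E [C [d [Hd H]]]. exists C, d. split; auto. intros h Hh. rewrite <- E by lra. auto.
Qed.

Lemma bigO_plus n phi psi : bigO n phi -> bigO n psi -> bigO n (fun h => phi h + psi h).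
Proof.
  intros [C1 [d1 [Hd1 H1]]] [C2 [d2 [Hd2 H2]]]. exists (C1 + C2), (Rmin d1 d2). split.
  now apply Rmin_pos.
  intros h Hh. assert (h < d1) by (eapply Rlt_le_trans; [apply Hh|apply Rmin_l]).
  assert (h < d2) by (eapply Rlt_le_trans; [apply Hh|apply Rmin_r]).
  eapply Rle_trans. apply Rabs_triang.
  specialize (H1 h ltac:(lra)). specialize (H2 h ltac:(lra)). lra.
Qed.

Lemma bigO_mul m n phi psi : bigO m phi -> bigO n psi -> bigO (m + n) (fun h => phi h * psi h).
Proof.
  intros [C1 [d1 [Hd1 H1]]] [C2 [d2 [Hd2 H2]]]. exists (C1 * C2), (Rmin d1 d2). split.
  now apply Rmin_pos.
  intros h Hh. assert (h < d1) by (eapply Rlt_le_trans; [apply Hh|apply Rmin_l]).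
  assert (h < d2) by (eapply Rlt_le_trans; [apply Hh|apply Rmin_r]).
  specialize (H1 h ltac:(lra)). specialize (H2 h ltac:(lra)).
  rewrite Rabs_mult, pow_add.
  replace (C1 * C2 * (h ^ m * h ^ n)) with ((C1 * h ^ m) * (C2 * h ^ n)) by ring.
  apply Rmult_le_compat; auto; apply Rabs_pos.
Qed.

Lemma bigO_sub n phi psi : bigO n phi -> bigO n psi -> bigO n (fun h => phi h - psi h).
Proof.
  intros H1 [C2 [d2 [Hd2 H2]]]. apply bigO_plus; auto.
  exists C2, d2. split; auto. intros h Hh. rewrite Rabs_Ropp. auto.
Qed.

Lemma bigO_weak m n phi : (m <= n)%nat -> bigO n phi -> bigO m phi.
Proof.
  intros Hmn [C [d [Hd H]]]. exists (Rabs C), (Rmin d 1). split.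
  apply Rmin_pos; lra.
  intros h Hh. assert (h < d) by (eapply Rlt_le_trans; [apply Hh|apply Rmin_l]).
  assert (h < 1) by (eapply Rlt_le_trans; [apply Hh|apply Rmin_r]).
  specialize (H h ltac:(lra)). eapply Rle_trans. apply H.
  assert (h ^ n <= h ^ m).
  { replace n with (m + (n - m))%nat by lia. rewrite pow_add.
    assert (0 <= h ^ m) by (apply pow_le; lra).
    assert (h ^ (n - m) <= 1) by (rewrite <- (pow1 (n - m)); apply pow_incr; lra).
    assert (0 <= h ^ (n - m)) by (apply pow_le; lra). nra. }
  assert (0 <= h ^ n) by (apply pow_le; lra).
  assert (C <= Rabs C) by apply Rle_abs. assert (0 <= Rabs C) by apply Rabs_pos. nra.
Qed.

Lemma bigO_div n phi : bigO (S n) phi -> bigO n (fun h => phi h / h).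
Proof.
  intros [C [d [Hd H]]]. exists C, d. split; auto. intros h Hh.
  specialize (H h Hh). unfold Rdiv. rewrite Rabs_mult, Rabs_inv, (Rabs_pos_eq h) by lra.
  simpl in H. apply Rmult_le_reg_r with h. lra.
  rewrite Rmult_assoc, Rinv_l by lra. lra.
Qed.

Lemma bigO_const c : bigO 0 (fun _ => c).
Proof. exists (Rabs c), 1. split. lra. intros. simpl. lra. Qed.

Lemma bigO_pow n : bigO n (fun h => h ^ n).
Proof.
  exists 1, 1. split. lra. intros h Hh. rewrite Rabs_pos_eq. lra. apply pow_le; lra.
Qed.

Lemma bigO_leaf5 g X m : smooth g -> Rabs m <= 2 ->
  bigO 6 (fun h => g (X + m * h) - poly5 g X (m * h)).
Proof.
  intros Hg Hm. destruct (taylor5 g X Hg) as [M [HM HMb]].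
  exists (M * Rabs m ^ 6), (1/2). split. lra. intros h Hh.
  specialize (HMb (X + m * h)).
  replace (X + m * h - X) with (m * h) in HMb by ring.
  rewrite Rabs_mult, (Rabs_pos_eq h) in HMb by lra.
  rewrite Rpow_mult_distr, <- Rmult_assoc in HMb. apply HMb.
  assert (0 <= Rabs m) by apply Rabs_pos. nra.
Qed.

Lemma bigO_leaf2 g X m : smooth g -> Rabs m <= 2 ->
  bigO 3 (fun h => g (X + m * h) - poly2 g X (m * h)).
Proof.
  intros Hg Hm. destruct (taylor2 g X Hg) as [M [HM HMb]].
  exists (M * Rabs m ^ 3), (1/2). split. lra. intros h Hh.
  specialize (HMb (X + m * h)).
  replace (X + m * h - X) with (m * h) in HMb by ring.
  rewrite Rabs_mult, (Rabs_pos_eq h) in HMb by lra.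
  rewrite Rpow_mult_distr, <- Rmult_assoc in HMb. apply HMb.
  assert (0 <= Rabs m) by apply Rabs_pos. nra.
Qed.

Definition eF (f u : R -> R) X m h := f (u (X + m * h)) - poly5 (fun x => f (u x)) X (m * h).
Definition eu (u : R -> R) X m h := u (X + m * h) - poly5 u X (m * h).
Definition eG (Db : R -> R -> R) (u : R -> R) X m h :=
  Db (u X) (u (X + m * h)) - poly2 (fun y => Db (u X) (u y)) X (m * h).

Definition Rex (h th kap eF1 eFm1 eF2 eFm2 eu2 eu1 eu0 eum1 eum2 ea eb g0 g1 g2 u3 u4 u5 : R) : R :=
 (/2 * ((eF1 - eFm1) + (1 - th)/4 * (2 * eF1 - 2 * eFm1 - eF2 + eFm2))) / h
 + (1 - kap)/8 * ( h^6 * ((g1 * u5 + g2 * u4)/2)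
     + ea * (h^3 * u3 + h^4 * (u4/2) + h^5 * (u5/4)) - eb * (h^3 * u3 - h^4 * (u4/2) + h^5 * (u5/4))
     + ((g0 + h * g1 + h^2 * (g2/2)) + ea) * (eu2 - 3 * eu1 + 3 * eu0 - eum1)
     - ((g0 - h * g1 + h^2 * (g2/2)) + eb) * (eu1 - 3 * eu0 + 3 * eum1 - eum2) ) / h.

Lemma ident (u f D : R -> R) (Dbar : R -> R -> R) (kap th : R) X h :
  smooth u -> smooth2 Dbar ->
  (forall v w, Dbar v w = Dbar w v) -> (forall v, Dbar v v = D v) -> 0 < h ->
  fsr_error u f Dbar kap 0 th 0 h X
  - (Derive (fun x => f (u x)) X
     + (3 * th - 1) / 12 * Derive_n (fun x => f (u x)) 3 X * h ^ 2
     - (kap - 1) / 8 * (Derive (fun x => D (u x)) X * Derive_n u 3 X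
                        + D (u X) * Derive_n u 4 X) * h ^ 3
     + (15 * th - 13) / 240 * Derive_n (fun x => f (u x)) 5 X * h ^ 4)
  = Rex h th kap (eF f u X 1 h) (eF f u X (-1) h) (eF f u X 2 h) (eF f u X (-2) h)
      (eu u X 2 h) (eu u X 1 h) (eu u X 0 h) (eu u X (-1) h) (eu u X (-2) h)
      (eG Dbar u X 1 h) (eG Dbar u X (-1) h)
      (Derive_n (fun y => Dbar (u X) (u y)) 0 X) (Derive_n (fun y => Dbar (u X) (u y)) 1 X)
      (Derive_n (fun y => Dbar (u X) (u y)) 2 X)
      (Derive_n u 3 X) (Derive_n u 4 X) (Derive_n u 5 X).
Proof.
  intros Hu HDb Hsym Hdiag Hh.
  rewrite fsr_expand by lra. cbv zeta beta.
  rewrite (Dkey u D Dbar X Hu HDb Hsym Hdiag).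
  rewrite <- Hdiag.
  assert (HA : Dbar (u (X + 0 * h)) (u (X + 1 * h)) = Dbar (u X) (u (X + 1 * h)))
    by (replace (X + 0 * h) with X by ring; reflexivity).
  assert (HB : Dbar (u (X + -1 * h)) (u (X + 0 * h)) = Dbar (u X) (u (X + -1 * h)))
    by (rewrite Hsym; replace (X + 0 * h) with X by ring; reflexivity).
  rewrite HA, HB.
  change (Derive (fun x => f (u x)) X) with (Derive_n (fun x => f (u x)) 1 X).
  change (Derive (fun y => Dbar (u X) (u y)) X) with (Derive_n (fun y => Dbar (u X) (u y)) 1 X).
  change (Dbar (u X) (u X)) with (Derive_n (fun y => Dbar (u X) (u y)) 0 X).
  unfold Rex, eF, eu, eG, poly5, poly2.
  field. lra.
Qed.

Lemma bigO_id : bigO 1 (fun h => h).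
Proof. apply bigO_ext with (fun h => h ^ 1). intros; ring. apply bigO_pow. Qed.

Lemma abs2 m : -2 <= m <= 2 -> Rabs m <= 2.
Proof. intros. apply Rabs_le. lra. Qed.

Theorem mainTheorem2 (u f D : R -> R) (Dbar : R -> R -> R) (kap th : R) :
  smooth u -> smooth f -> smooth D -> smooth2 Dbar ->
  (forall v w, Dbar v w = Dbar w v) ->
  (forall v, Dbar v v = D v) ->
  forall X : R,
    (exists C delta : R, 0 < delta /\
       forall h : R, 0 < h < delta ->
         Rabs (fsr_error u f Dbar kap 0 th 0 h X
               - (Derive (fun x => f (u x)) X
                  + (3 * th - 1) / 12 * Derive_n (fun x => f (u x)) 3 X * h ^ 2
                  - (kap - 1) / 8
                      * (Derive (fun x => D (u x)) X * Derive_n u 3 X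
                         + D (u X) * Derive_n u 4 X) * h ^ 3
                  + (15 * th - 13) / 240 * Derive_n (fun x => f (u x)) 5 X * h ^ 4))
         <= C * h ^ 5)
    /\
    (th = 1 / 3 ->
     exists C delta : R, 0 < delta /\
       forall h : R, 0 < h < delta ->
         Rabs (fsr_error u f Dbar kap 0 th 0 h X - Derive (fun x => f (u x)) X)
         <= C * h ^ 3).
Proof.
  intros Hu Hf HD HDb Hsym Hdiag X.
  assert (HF : smooth (fun x => f (u x))) by (apply smooth_comp; auto).
  assert (HG : smooth (fun y => Dbar (u X) (u y))).
  { apply (smooth_comp (fun t => Dbar (u X) t) u); auto. apply smooth_sec2; auto. }
  assert (LF : forall m, -2 <= m <= 2 -> bigO 6 (fun h => eF f u X m h)).
  { intros m Hm. unfold eF. apply (bigO_leaf5 (fun x => f (u x))); auto. apply abs2; auto. }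
  assert (LU : forall m, -2 <= m <= 2 -> bigO 6 (fun h => eu u X m h)).
  { intros m Hm. unfold eu. apply (bigO_leaf5 u); auto. apply abs2; auto. }
  assert (LG : forall m, -2 <= m <= 2 -> bigO 3 (fun h => eG Dbar u X m h)).
  { intros m Hm. unfold eG. apply (bigO_leaf2 (fun y => Dbar (u X) (u y))); auto. apply abs2; auto. }
  set (g0 := Derive_n (fun y => Dbar (u X) (u y)) 0 X).
  set (g1 := Derive_n (fun y => Dbar (u X) (u y)) 1 X).
  set (g2 := Derive_n (fun y => Dbar (u X) (u y)) 2 X).
  set (u3 := Derive_n u 3 X). set (u4 := Derive_n u 4 X). set (u5 := Derive_n u 5 X).
  assert (Hrex : bigO 5 (fun h => Rex h th kap (eF f u X 1 h) (eF f u X (-1) h) (eF f u X 2 h) (eF f u X (-2) h)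
      (eu u X 2 h) (eu u X 1 h) (eu u X 0 h) (eu u X (-1) h) (eu u X (-2) h)
      (eG Dbar u X 1 h) (eG Dbar u X (-1) h) g0 g1 g2 u3 u4 u5)).
  { unfold Rex. apply bigO_plus.
    - apply bigO_div. apply (bigO_mul 0 6). apply bigO_const.
      apply bigO_plus. apply bigO_sub; apply LF; lra.
      apply (bigO_mul 0 6). apply bigO_const.
      apply bigO_plus. apply bigO_sub. apply bigO_sub.
      apply (bigO_mul 0 6). apply bigO_const. apply LF; lra.
      apply (bigO_mul 0 6). apply bigO_const. apply LF; lra.
      apply LF; lra. apply LF; lra.
    - apply bigO_div. apply (bigO_mul 0 6). apply bigO_const.
      assert (HP : forall s, bigO 3 (fun h => h ^ 3 * u3 + s * (h ^ 4 * (u4 / 2)) + h ^ 5 * (u5 / 4))).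
      { intro s. apply bigO_plus. apply bigO_plus.
        apply (bigO_mul 3 0). apply bigO_pow. apply bigO_const.
        apply (bigO_mul 0 3). apply bigO_const. apply (bigO_weak 3 4). lia.
        apply (bigO_mul 4 0). apply bigO_pow. apply bigO_const.
        apply (bigO_weak 3 5). lia. apply (bigO_mul 5 0). apply bigO_pow. apply bigO_const. }
      assert (HA : forall s m, -2 <= m <= 2 ->
        bigO 0 (fun h => g0 + s * (h * g1) + h ^ 2 * (g2 / 2) + eG Dbar u X m h)).
      { intros s m Hm. apply bigO_plus. apply bigO_plus. apply bigO_plus. apply bigO_const.
        apply (bigO_mul 0 0). apply bigO_const. apply (bigO_weak 0 1). lia.
        apply (bigO_mul 1 0). apply bigO_id. apply bigO_const.
        apply (bigO_weak 0 2). lia. apply (bigO_mul 2 0). apply bigO_pow. apply bigO_const.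
        apply (bigO_weak 0 3). lia. apply LG; auto. }
      apply bigO_sub. apply bigO_plus. apply bigO_sub. apply bigO_plus.
      + apply (bigO_mul 6 0). apply bigO_pow. apply bigO_const.
      + apply (bigO_mul 3 3). apply LG; lra.
        apply (bigO_ext _ (fun h => h ^ 3 * u3 + 1 * (h ^ 4 * (u4 / 2)) + h ^ 5 * (u5 / 4))).
        intros; ring. apply HP.
      + apply (bigO_mul 3 3). apply LG; lra.
        apply (bigO_ext _ (fun h => h ^ 3 * u3 + (-1) * (h ^ 4 * (u4 / 2)) + h ^ 5 * (u5 / 4))).
        intros; ring. apply HP.
      + apply (bigO_mul 0 6).
        apply (bigO_ext _ (fun h => g0 + 1 * (h * g1) + h ^ 2 * (g2 / 2) + eG Dbar u X 1 h)).
        intros; ring. apply HA; lra.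
        apply bigO_sub. apply bigO_plus. apply bigO_sub. apply LU; lra.
        apply (bigO_mul 0 6). apply bigO_const. apply LU; lra.
        apply (bigO_mul 0 6). apply bigO_const. apply LU; lra. apply LU; lra.
      + apply (bigO_mul 0 6).
        apply (bigO_ext _ (fun h => g0 + (-1) * (h * g1) + h ^ 2 * (g2 / 2) + eG Dbar u X (-1) h)).
        intros; ring. apply HA; lra.
        apply bigO_sub. apply bigO_plus. apply bigO_sub. apply LU; lra.
        apply (bigO_mul 0 6). apply bigO_const. apply LU; lra.
        apply (bigO_mul 0 6). apply bigO_const. apply LU; lra. apply LU; lra. }
  assert (Hmain : bigO 5 (fun h => fsr_error u f Dbar kap 0 th 0 h X
               - (Derive (fun x => f (u x)) X
                  + (3 * th - 1) / 12 * Derive_n (fun x => f (u x)) 3 X * h ^ 2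
                  - (kap - 1) / 8
                      * (Derive (fun x => D (u x)) X * Derive_n u 3 X
                         + D (u X) * Derive_n u 4 X) * h ^ 3
                  + (15 * th - 13) / 240 * Derive_n (fun x => f (u x)) 5 X * h ^ 4))).
  { eapply bigO_ext; [|exact Hrex]. intros h Hh. symmetry. apply ident; auto. }
  split. exact Hmain.
  intro Hth.
  assert (H3 : bigO 3 (fun h => fsr_error u f Dbar kap 0 th 0 h X - Derive (fun x => f (u x)) X)).
  { eapply bigO_ext.
    2:{ apply bigO_plus. apply (bigO_weak 3 5). lia. exact Hmain.
        apply bigO_plus.
        apply (bigO_mul 0 3). apply (bigO_const (- ((kap - 1) / 8
                      * (Derive (fun x => D (u x)) X * Derive_n u 3 X
                         + D (u X) * Derive_n u 4 X)))). apply bigO_pow.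
        apply (bigO_weak 3 4). lia.
        apply (bigO_mul 0 4). apply (bigO_const ((15 * th - 13) / 240 * Derive_n (fun x => f (u x)) 5 X)).
        apply bigO_pow. }
    intros h Hh. cbv beta. subst th. field. }
  exact H3.
Qed.
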